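(* Let $B$ be a unital $C^*$-algebra with a $*$-isomorphism $\psi:B\to M_n\otimes B$ satisfying $\psi(1)=I_n\otimes1$, and suppose that $A$ is a maximal abelian $*$-subalgebra of $B$ with $\sigma_1(A)\subset A$. Then $\psi_m(A)\subset M_n^{\otimes m}\otimes A$ for all $m\ge0$.
   Context: $M_n=M_n(\mathbb{C})$, identity $I_n$. Define $\psi_0=\mathrm{id}_B$, $\psi_{m+1}=(\mathrm{id}^{\otimes m}\otimes\psi)\circ\psi_m:B\to M_n^{\otimes(m+1)}\otimes B$. With $f(b)=I_n\otimes b$, $\sigma_1=\psi^{-1}\circ f:B\to B$. *)

(* Defs.v *)
From HB Require Import structures.
From mathcomp Require Import all_boot all_order all_algebra.
From mathcomp Require Import reals.
From mathcomp.real_closed Require Import complex.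

Set Implicit Arguments.
Unset Strict Implicit.
Unset Printing Implicit Defensive.

Import Order.TTheory GRing.Theory Num.Theory.
Local Open Scope ring_scope.

Section CStar.
Variables (R : realType) (B : algType R[i]).

Definition Cauchy_seq (nrm : B -> R) (u : nat -> B) : Prop :=
  forall e : R, 0 < e -> exists N : nat,
    forall p q : nat, (N <= p)%N -> (N <= q)%N -> nrm (u p - u q) < e.

Definition converges_to (nrm : B -> R) (u : nat -> B) (l : B) : Prop :=
  forall e : R, 0 < e -> exists N : nat, forall p : nat, (N <= p)%N -> nrm (u p - l) < e.

Definition is_Cstar_algebra (star : B -> B) (nrm : B -> R) : Prop :=
      (forall x y, star (x + y) = star x + star y)/\
      (forall (c : R[i]) x, star (c *: x) = (conjc c) *: star x)/\
      (forall x y, star (x * y) = star y * star x)/\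
      (forall x, star (star x) = x)/\
      (forall x, nrm x = 0 -> x = 0)/\
      (forall x y, nrm (x + y) <= nrm x + nrm y)/\
      (forall (c : R[i]) x, nrm (c *: x) = ComplexField.Normc.normc c * nrm x)/\
      (forall x y, nrm (x * y) <= nrm x * nrm y)/\
      (forall x, nrm (star x * x) = nrm x ^+ 2) /\
      (forall u, Cauchy_seq nrm u -> exists l, converges_to nrm u l).

(* The *-algebra M_n (x) B, identified with n x n matrices over B; its       *)
(* involution is the conjugate transpose (X^* )_{ij} = (X_{ji})^*.           *)
Definition mx_star (star : B -> B) (n : nat) (X : 'M[B]_n) : 'M[B]_n :=
  \matrix_(i, j) star (X j i).

Definition is_star_iso (star : B -> B) (n : nat) (psi : B -> 'M[B]_n) : Prop :=
  [/\ (forall x y, psi (x + y) = psi x + psi y),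
      (forall (c : R[i]) x, psi (c *: x) = map_mx (fun y => c *: y) (psi x)),
      (forall x y, psi (x * y) = psi x *m psi y),
      (forall x, psi (star x) = mx_star star (psi x)) &
      bijective psi].

Definition is_star_subalgebra (star : B -> B) (A : B -> Prop) : Prop :=
  [/\ A 0,
      (forall x y, A x -> A y -> A (x + y)),
      (forall (c : R[i]) x, A x -> A (c *: x)),
      (forall x y, A x -> A y -> A (x * y)) &
      (forall x, A x -> A (star x))].

Definition is_abelian (A : B -> Prop) : Prop :=
  forall x y, A x -> A y -> x * y = y * x.

Definition is_masa (star : B -> B) (A : B -> Prop) : Prop :=
  [/\ is_star_subalgebra star A, is_abelian A &
      forall A' : B -> Prop, is_star_subalgebra star A' -> is_abelian A' ->
        (forall x, A x -> A' x) -> forall x, A' x -> A x].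

(* psi_m : B -> M_n^{(x) m} (x) B, where an element of M_n^{(x) m} (x) B is  *)
(* encoded by its B-valued matrix entries indexed by multi-indices          *)
(* (m-tuples of 'I_n).  The HEAD of a tuple indexes the LAST M_n tensor     *)
(* factor (the one adjacent to B), so that                                  *)
(*   psi_{m+1} = (id^{(x) m} (x) psi) o psi_m                              *)
(* reads psi_{m+1}(b)[(k::I),(l::J)] = psi(psi_m(b)[I,J])[k,l].             *)
Fixpoint psi_iter (n : nat) (psi : B -> 'M[B]_n) (m : nat) {struct m} :
    B -> m.-tuple 'I_n -> m.-tuple 'I_n -> B :=
  match m return B -> m.-tuple 'I_n -> m.-tuple 'I_n -> B with
  | 0 => fun b _ _ => b
  | m'.+1 => fun b (I J : m'.+1.-tuple 'I_n) =>
      psi (@psi_iter n psi m' b (behead_tuple I) (behead_tuple J)) (thead I) (thead J)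
  end.

End CStar.

(* Main.v *)
Require Import Defs.
From HB Require Import structures.
From mathcomp Require Import all_boot all_order all_algebra.
From mathcomp Require Import reals.
From mathcomp.real_closed Require Import complex.
From mathcomp Require Import ring.
Import Order.TTheory GRing.Theory Num.Theory.
Local Open Scope ring_scope.

Local Open Scope complex_scope.
Lemma t1 (R : realType) : conjc ('i : R[i]) = - 'i.
Proof. apply/eqP; rewrite eq_complex /=. rewrite oppr0 !eqxx //. Qed.
Lemma t2 (R : realType) : conjc (- 'i : R[i]) = 'i.
Proof. apply/eqP; rewrite eq_complex /=. rewrite !opprK oppr0 !eqxx //. Qed.
Lemma t3 (R : realType) : (- 'i) * 'i = 1 :> R[i].
Proof. by rewrite mulNr -expr2 sqr_i opprK. Qed.
Lemma t4 (R : realType) : (- 'i) * (- 'i) = -1 :> R[i].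
Proof. by rewrite mulrNN -expr2 sqr_i. Qed.
Lemma t5 (R : realType) (B : algType R[i]) (y z : B) :
  y = 2^-1 *: ((y + z) + (- 'i) *: ('i *: y + (- 'i) *: z)).
Proof.
rewrite (scalerDr (- 'i)) !scalerA t3 t4 scale1r scaleN1r.
rewrite addrACA subrr addr0 -mulr2n -[y *+ 2](@scaler_nat R[i]) scalerA mulVf ?scale1r //.
by rewrite pnatr_eq0.
Qed.
Local Close Scope complex_scope.

Section Aux.
Variables (R : realType) (B : algType R[i]) (star : B -> B).
Hypotheses (sD : forall x y, star (x+y) = star x + star y)
  (sZ : forall (c : R[i]) x, star (c*:x) = conjc c *: star x)
  (sM : forall x y, star (x*y) = star y * star x)
  (sK : forall x, star (star x) = x).

Definition commt (S : B -> Prop) : B -> Prop :=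
  fun z => forall s, S s -> z * s = s * z.

Lemma comm_star S : (forall s, S s -> S (star s)) ->
  forall z, commt S z -> commt S (star z).
Proof.
move=> HS z Hz s Ss; have := Hz _ (HS _ Ss).
by move=> /(congr1 star); rewrite !sM sK => ->.
Qed.

Lemma dcomm S : (forall s, S s -> S (star s)) ->
  (forall x y, S x -> S y -> x * y = y * x) ->
  [/\ is_star_subalgebra star (commt (commt S)),
      is_abelian (commt (commt S)) &
      forall x, S x -> commt (commt S) x].
Proof.
move=> HS Hab; split.
- split.
  + by move=> z _; rewrite mul0r mulr0.
  + by move=> x y Hx Hy z Hz; rewrite mulrDl mulrDr Hx // Hy.
  + by move=> c x Hx z Hz; rewrite -scalerAl -scalerAr Hx.
  + by move=> x y Hx Hy z Hz; rewrite -mulrA Hy // mulrA Hx // mulrA.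
  + move=> x Hx; apply: comm_star => //; exact: comm_star.
- move=> x y Hx Hy; apply: Hx => s Ss; apply: Hy => t St.
  exact: Hab.
- by move=> x Sx z Hz; rewrite Hz.
Qed.

Lemma masa_sa A : is_masa star A -> forall h, star h = h -> commt A h -> A h.
Proof.
case=> [[A0 AD AZ AM AS] Aab Amax] h hs hc.
pose S := fun x => A x \/ x = h.
have HS : forall s, S s -> S (star s).
  by move=> s [As|->]; [left; exact: AS| right].
have Hab : forall x y, S x -> S y -> x * y = y * x.
  move=> x y [Ax|->] [Ay|->] //; first exact: Aab.
  - by rewrite hc.
  - by rewrite hc.
have [H1 H2 H3] := @dcomm S HS Hab.
apply: (Amax _ H1 H2); first by move=> x Ax; apply: H3; left.
by apply: H3; right.
Qed.


Lemma masa_comm A : is_masa star A -> forall y, commt A y -> A y.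
Proof.
move=> HA y hy.
have [[A0 AD AZ AM AS] Aab Amax] := HA.
have hys : commt A (star y) by apply: comm_star.
have c1 : commt A (y + star y).
  by move=> s As; rewrite mulrDl mulrDr hy // hys.
have c2 : commt A ('i%C *: y + (- 'i%C) *: star y).
  move=> s As; rewrite mulrDl mulrDr -!scalerAl -!scalerAr hy // hys //.
have a1 : A (y + star y).
  by apply: (@masa_sa A HA) => //; rewrite sD sK addrC.
have a2 : A ('i%C *: y + (- 'i%C) *: star y).
  by apply: (@masa_sa A HA) => //; rewrite sD !sZ sK addrC t1 t2.
rewrite (@t5 R B y (star y)); apply: (AZ); apply: (AD) => //; exact: AZ.
Qed.
End Aux.


Theorem proposition3p4 (R : realType) (B : algType R[i])
    (star : B -> B) (nrm : B -> R) (HB : is_Cstar_algebra star nrm)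
    (n : nat) (psi : B -> 'M[B]_n) (Hpsi : is_star_iso star psi)
    (Hpsi1 : psi 1 = 1%:M)
    (A : B -> Prop) (HA : is_masa star A)
    (* sigma_1(A) is contained in A, where sigma_1 = psi^{-1} o f with
       f(b) = I_n (x) b = b%:M; i.e. the unique b with psi b = a%:M lies in A *)
    (Hsigma : forall a b, A a -> psi b = a%:M -> A b) :
  forall (m : nat) (a : B), A a ->
    forall I J : m.-tuple 'I_n, A (@psi_iter R B n psi m a I J).
Proof.
case: Hpsi => pD pZ pM pS [phi phiK Kphi].
have [sD [sZ [sM [sK _]]]] := HB.
have [_ Aab _] := HA.
have key : forall a, A a -> forall k l, A (psi a k l).
  move=> a Aa k l; apply: (@masa_comm R B star sD sZ sM sK A HA) => b Ab.
  have Ab' : A (phi (b%:M)) by apply: (Hsigma b) => //; rewrite Kphi.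
  have := Aab _ _ Aa Ab'; move/(congr1 psi); rewrite !pM Kphi.
  rewrite -diag_const_mx mul_mx_diag mul_diag_mx => /matrixP /(_ k l).
  by rewrite !mxE.
elim=> [|m IH] a Aa I J //=.
by apply: key; apply: IH.
Qed.
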